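(* Let $R$ be a supertropical semiring, $V$ a free $R$-module with base $(\varepsilon_i\mid i\in I)$, $q:V\to R$ a quadratic form, and $x\in V\setminus\{0\}$ a $q$-minimal vector. Then $|\operatorname{supp}(x)|\le 2$ if $q(x)\in\mathcal T$, and $|\operatorname{supp}(x)|\le4$ if $q(x)\in\mathcal G$.
   Context: All semirings are commutative with $1$. A semiring $R$ is supertropical if $e:=1+1$ satisfies $e+e=e$ and, for all $x,y\in R$: if $ex\neq ey$ then $x+y\in\{x,y\}$, and if $ex=ey$ then $x+y=ey$. $\mathcal T=R\setminus eR$, $\mathcal G=eR\setminus\{0\}$. A quadratic form on an $R$-module $V$ is a map $q:V\to R$ with $q(ax)=a^2q(x)$ such that some symmetric bilinear $b$ (a companion) satisfies $q(x+y)=q(x)+q(y)+b(x,y)$. Every $R$-module $V$ (and $R$ itself) carries the minimal ordering $x\le y\iff\exists z:\ x+z=y$, a partial order; $x<y$ means $x\le y$, $x\ne y$. A vector $x\in V$ is $q$-minimal if there is no $x'<x$ with $q(x')=q(x)$. For $x=\sum_i x_i\varepsilon_i$, $\operatorname{supp}(x)=\{i\in I: x_i\neq0\}$. *)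

(* Defs.v *)
From HB Require Import structures.
From mathcomp Require Import all_boot all_order all_algebra.
From Stdlib Require List.
Set Implicit Arguments. Unset Strict Implicit. Unset Printing Implicit Defensive.
Import GRing.Theory.
Local Open Scope ring_scope.

Definition supertropical (R : comPzSemiRingType) : Prop :=
  let e : R := 1 + 1 in
  e + e = e /\
  (forall x y : R, e * x != e * y -> x + y = x \/ x + y = y) /\
  (forall x y : R, e * x = e * y -> x + y = e * y).

Definition tangible (R : comPzSemiRingType) (x : R) : Prop :=
  ~ (exists y : R, x = (1 + 1) * y).
Definition ghost (R : comPzSemiRingType) (x : R) : Prop :=
  (exists y : R, x = (1 + 1) * y) /\ x <> 0.

(** The free R-module with base (eps_i | i in I): finitely supported
    coordinate functions I -> R. *)
Definition fin_supp (I : Type) (R : nmodType) (f : I -> R) : Prop :=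
  exists s : seq I, forall i, f i != 0 -> List.In i s.

Definition freemod (I : Type) (R : nmodType) := {f : I -> R | fin_supp f}.

Definition coord (I : Type) (R : nmodType) (x : freemod I R) : I -> R :=
  proj1_sig x.

Lemma fin_supp0 (I : Type) (R : nmodType) : fin_supp (fun _ : I => (0 : R)).
Proof. by exists [::] => i; rewrite eqxx. Qed.

Lemma fin_suppD (I : Type) (R : nmodType) (f g : I -> R) :
  fin_supp f -> fin_supp g -> fin_supp (fun i => f i + g i).
Proof.
move=> [s Hs] [t Ht]; exists (s ++ t) => i Hi; apply: List.in_or_app.
case: (eqVneq (f i) 0) => [Hf|Hf]; last by left; apply: Hs.
by right; apply: Ht; move: Hi; rewrite Hf add0r.
Qed.

Lemma fin_suppZ (I : Type) (R : pzSemiRingType) (a : R) (f : I -> R) :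
  fin_supp f -> fin_supp (fun i => a * f i).
Proof.
move=> [s Hs]; exists s => i Hi; apply: Hs.
by apply: contraNneq Hi => ->; rewrite mulr0.
Qed.

Definition vzero (I : Type) (R : nmodType) : freemod I R :=
  exist _ (fun _ => 0) (@fin_supp0 I R).

Definition vadd (I : Type) (R : nmodType) (x y : freemod I R) : freemod I R :=
  exist _ (fun i => coord x i + coord y i)
    (fin_suppD (proj2_sig x) (proj2_sig y)).

Definition vscale (I : Type) (R : pzSemiRingType) (a : R) (x : freemod I R)
  : freemod I R :=
  exist _ (fun i => a * coord x i) (fin_suppZ a (proj2_sig x)).

Definition is_quadratic_form (I : Type) (R : comPzSemiRingType)
  (q : freemod I R -> R) : Prop :=
  (forall (a : R) (x : freemod I R), q (vscale a x) = a ^+ 2 * q x) /\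
  exists b : freemod I R -> freemod I R -> R,
    (forall x y, b x y = b y x) /\
    (forall x y z, b (vadd x y) z = b x z + b y z) /\
    (forall (a : R) x y, b (vscale a x) y = a * b x y) /\
    (forall x y, q (vadd x y) = q x + q y + b x y).

Definition vle (I : Type) (R : nmodType) (x y : freemod I R) : Prop :=
  exists z, vadd x z = y.
Definition vlt (I : Type) (R : nmodType) (x y : freemod I R) : Prop :=
  vle x y /\ x <> y.

Definition q_minimal (I : Type) (R : comPzSemiRingType)
  (q : freemod I R -> R) (x : freemod I R) : Prop :=
  ~ (exists x', vlt x' x /\ q x' = q x).

Definition supp_card_le (I : Type) (R : nmodType) (x : freemod I R) (n : nat)
  : Prop :=
  exists s : seq I, (size s <= n)%N /\
    (forall i, coord x i != 0 -> List.In i s).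

(* Main.v *)
Require Import Defs.
From Stdlib Require Import ClassicalEpsilon FunctionalExtensionality ProofIrrelevance.
From Stdlib Require Classical_Prop List.
From HB Require Import structures.
From mathcomp Require Import all_boot all_order all_algebra.
From mathcomp Require Import zify.
Set Implicit Arguments. Unset Strict Implicit. Unset Printing Implicit Defensive.
Import GRing.Theory.
Local Open Scope ring_scope.
Local Notation coord := Defs.coord.

Section ST.
Variable R : comPzSemiRingType.
Local Notation e := (1 + 1 : R).
Hypothesis HR : supertropical R.

Lemma ee : e * e = e.
Proof. by rewrite mulrDr mulr1; case: HR. Qed.

Lemma eK (a : R) : e * (e * a) = e * a.
Proof. by rewrite mulrA ee. Qed.

Definition nle (a b : R) := e * a + e * b = e * b.

Lemma nle_refl a : nle a a.
Proof. by rewrite /nle -mulrDl; case: HR => ->. Qed.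

Lemma nle_total a b : nle a b \/ nle b a.
Proof.
case: HR => [H1 [H2 H3]].
case: (eqVneq (e*a) (e*b)) => Hab.
  by left; rewrite /nle Hab; exact: nle_refl.
have: e*(e*a) != e*(e*b) by rewrite !eK.
case/H2 => H; [right | left]; rewrite /nle; [by rewrite addrC | done].
Qed.

Lemma nle_trans a b c : nle a b -> nle b c -> nle a c.
Proof. by move=> Hab Hbc; rewrite /nle -Hbc addrA Hab. Qed.

Lemma absorb_ghost a c : nle c a -> e * a + c = e * a.
Proof.
move=> Hca; case: HR => [H1 [H2 H3]].
case: (eqVneq (e*(e*a)) (e*c)) => H.
  by rewrite H3 // -H eK.
case/H2: (H) => // H'.
have E: e*(e*a + c) = e*c by rewrite H'.
rewrite mulrDr eK addrC Hca in E.
by move: H; rewrite eK E eqxx.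
Qed.

Lemma absorb_tang a c : nle c a -> e * c != e * a -> a + c = a.
Proof.
move=> Hca Hne; case: HR => [_ [H2 _]].
have Hne': e*a != e*c by rewrite eq_sym.
case/H2: Hne' => // H'.
have E: e*(a + c) = e*c by rewrite H'.
rewrite mulrDr addrC Hca in E.
by move: Hne; rewrite E eqxx.
Qed.

Lemma exists_max (T : eqType) (F : T -> R) (l : seq T) (d : T) :
  exists k, forall j, j \in l -> nle (F j) (F k).
Proof.
elim: l => [|h t [m Hm]]; first by exists d.
case: (nle_total (F h) (F m)) => H.
  by exists m => j; rewrite in_cons => /orP [/eqP -> // | /Hm].
exists h => j; rewrite in_cons => /orP [/eqP -> | /Hm Hj]; first exact: nle_refl.
exact: nle_trans Hj H.
Qed.

Lemma select (T : finType) (F : T -> R) :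
  exists C : seq T, (size C <= 2)%N /\
    (tangible (\sum_p F p) -> (size C <= 1)%N) /\
    forall M : pred T, (forall p, p \in C -> M p) ->
      \sum_(p | M p) F p = \sum_p F p.
Proof.
case: HR => [H1 [H2 H3]].
case: (pickP (@predT T)) => [d _|H0]; last first.
  exists [::]; split => //; split => // M _.
  by rewrite !big_pred0 // => p; move: (H0 p).
have [k Hk] := exists_max F (enum T) d.
have {}Hk : forall j, nle (F j) (F k) by move=> j; apply: Hk; rewrite mem_enum.
case: (boolP [exists j, (j != k) && (e * F j == e * F k)]) =>
   [/existsP [j /andP [Hjk /eqP Hj]] | /existsPn Hn].
- have key : forall M : pred T, M j -> M k -> \sum_(p | M p) F p = e * F k.
    move=> M Mj Mk; rewrite (bigD1 k) //= (bigD1 j) /=; last by rewrite Mj Hjk.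
    rewrite addrA [F k + F j]addrC (H3 (F j) (F k) Hj).
    apply: (big_ind (fun r => e * F k + r = e * F k)) => [|x y Hx Hy|p _].
    + by rewrite addr0.
    + by rewrite addrA Hx Hy.
    + exact: absorb_ghost.
  exists [:: j; k]; split => //; split.
    by move=> Ht; exfalso; apply: Ht; exists (F k); rewrite (key predT).
  move=> M HM; rewrite (key M) ?(key predT) //; apply: HM;
    by rewrite !inE eqxx ?orbT.
- have key : forall M : pred T, M k -> \sum_(p | M p) F p = F k.
    move=> M Mk; rewrite (bigD1 k) //=.
    apply: (big_ind (fun r => F k + r = F k)) => [|x y Hx Hy|p /andP [_ Hpk]].
    + by rewrite addr0.
    + by rewrite addrA Hx Hy.
    + apply: absorb_tang => //; have := Hn p; by rewrite Hpk.
  exists [:: k]; split => //; split => [//|M HM].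
  by rewrite !key //; apply: HM; rewrite inE.
Qed.
End ST.

Section V.
Variables (R : comPzSemiRingType) (I : Type).
Local Notation V := (freemod I R).

Lemma vext (x y : V) : (forall i, coord x i = coord y i) -> x = y.
Proof.
case: x => f hf; case: y => g hg /= H.
have E := functional_extensionality f g H; subst g.
by rewrite (proof_irrelevance _ hf hg).
Qed.

Lemma coord_vadd (x y : V) i : coord (vadd x y) i = coord x i + coord y i.
Proof. by []. Qed.

Lemma coord_vzero i : coord (vzero I R) i = 0.
Proof. by []. Qed.

Fixpoint vsumn (u : nat -> V) (m : nat) : V :=
  if m is m'.+1 then vadd (vsumn u m') (u m') else vzero I R.

Lemma coord_vsumn u m j : coord (vsumn u m) j = \sum_(k < m) coord (u k) j.
Proof.
elim: m => [|m IH]; first by rewrite big_ord0.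
by rewrite big_ord_recr /= IH.
Qed.

Lemma vscale0 (x : V) : vscale 0 x = vzero I R.
Proof. by apply: vext => i /=; rewrite mul0r. Qed.

Definition uP (P : pred nat) (u : nat -> V) k := if P k then u k else vzero I R.

Lemma single_fs (i : I) (a : R) :
  fin_supp (fun j => if excluded_middle_informative (j = i) then a else (0:R)).
Proof.
exists [:: i] => j; destruct (excluded_middle_informative (j = i)) as [E|E]; first by left.
by rewrite eqxx.
Qed.

Definition single (i : I) (a : R) : V := exist _ _ (single_fs i a).

Lemma dedup (l : list I) : exists l', List.NoDup l' /\
  forall i, List.In i l' <-> List.In i l.
Proof.
elim: l => [|a t [l' [Hnd Hin]]]; first by exists nil; split => //; constructor.
case: (Classical_Prop.classic (List.In a l')) => Ha.
  exists l'; split => // i; split => [/Hin H|[<- //|/Hin //]]; by right.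
exists (a :: l'); split; first by constructor.
move=> i /=; split => [[->|/Hin]|[->|/Hin]]; tauto.
Qed.

Section Q.
Variable q : V -> R.
Variable b : V -> V -> R.
Hypothesis qZ : forall (a : R) (x : V), q (vscale a x) = a ^+ 2 * q x.
Hypothesis bC : forall x y, b x y = b y x.
Hypothesis bD : forall x y z, b (vadd x y) z = b x z + b y z.
Hypothesis bZ : forall (a : R) x y, b (vscale a x) y = a * b x y.
Hypothesis qD : forall x y, q (vadd x y) = q x + q y + b x y.

Lemma q0 : q (vzero I R) = 0.
Proof. by rewrite -(vscale0 (vzero I R)) qZ expr2 !mul0r. Qed.
Lemma b0l y : b (vzero I R) y = 0.
Proof. by rewrite -(vscale0 (vzero I R)) bZ mul0r. Qed.
Lemma b0r y : b y (vzero I R) = 0.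
Proof. by rewrite bC b0l. Qed.

Lemma b_vsumn u m y : b (vsumn u m) y = \sum_(k < m) b (u k) y.
Proof.
elim: m => [|m IH] /=; first by rewrite big_ord0 b0l.
by rewrite bD IH big_ord_recr.
Qed.

Lemma q_vsumn u m :
  q (vsumn u m) = \sum_(k < m) (q (u k) + \sum_(l < k) b (u l) (u k)).
Proof.
elim: m => [|m IH] /=; first by rewrite big_ord0 q0.
by rewrite qD IH b_vsumn big_ord_recr /= -addrA.
Qed.

Definition Fp (u : nat -> V) (n : nat) (p : 'I_n * 'I_n) : R :=
  if (p.2 < p.1)%N then b (u p.2) (u p.1)
  else if p.2 == p.1 then q (u p.1) else 0.

Lemma q_pairs u n : q (vsumn u n) = \sum_(p : 'I_n * 'I_n) Fp u p.
Proof.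
transitivity (\sum_(i < n) \sum_(j < n) Fp u (i, j)); last first.
  by rewrite pair_bigA; apply: eq_bigr => -[i j].
rewrite q_vsumn; apply: eq_bigr => k _.
rewrite (bigID (fun j : 'I_n => (j < k)%N)) /= addrC; congr (_ + _); last first.
  have W := @big_ord_widen _ 0 +%R k n (fun l => b (u l) (u k)) (ltnW (ltn_ord k)). rewrite W.
  by apply: eq_bigr => j Hj; rewrite /Fp /= Hj.
rewrite (bigD1 k) /= ?ltnn // /Fp /= ltnn eqxx big1 ?addr0 //.
by move=> j /andP [Hjk Hne]; rewrite (negbTE Hjk) (negbTE Hne).
Qed.

Lemma Fp_mask u n P (p : 'I_n * 'I_n) :
  Fp (uP P u) p = if P p.1 && P p.2 then Fp u p else 0.
Proof.
case: p => i j; rewrite /Fp /uP /=.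
case: (eqVneq j i) => [->|Hne]; first by rewrite ltnn andbb; case: (P i); rewrite ?q0.
case: (P i); case: (P j) => /=; case: ifP => //; rewrite ?b0l ?b0r //.
Qed.
End Q.
End V.

Lemma size_length (T : Type) (s : seq T) : size s = length s.
Proof. by elim: s => //= a l ->. Qed.

Lemma size_flat2 (T : Type) (f g : T -> nat) (C : seq T) :
  size (flatten [seq [:: f p; g p] | p <- C]) = (2 * size C)%N.
Proof. elim: C => //= p C IH; rewrite IH; lia. Qed.

Theorem proposition6p4 (R : comPzSemiRingType) (I : Type)
  (q : freemod I R -> R) (x : freemod I R) :
  supertropical R -> is_quadratic_form q ->
  x <> vzero I R -> q_minimal q x ->
  (tangible (q x) -> supp_card_le x 2) /\
  (ghost (q x) -> supp_card_le x 4).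
Proof.
move=> HR [qZ [b [bC [bD [bZ qD]]]]] Hx0 Hmin.
have [s0 Hs0] := proj2_sig x.
have [s1 [Hnd1 Hin1]] := dedup s0.
pose s := List.filter (fun i => coord x i != 0) s1.
have Hnd : List.NoDup s := List.NoDup_filter _ Hnd1.
have Hin : forall i, List.In i s <-> coord x i != 0.
  move=> i; rewrite List.filter_In Hin1; split; first by case.
  by move=> H; split => //; apply: Hs0.
have [i0 _] : exists i0 : I, True.
  case Es: s => [|i0 s']; last by exists i0.
  exfalso; apply: Hx0; apply: vext => i.
  case: (eqVneq (coord x i) 0) => // /Hin; by rewrite Es.
pose n := length s.
pose w : nat -> freemod I R :=
  fun k => single (List.nth k s i0) (coord x (List.nth k s i0)).
have nth_inj : forall k l, (k < n)%N -> (l < n)%N ->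
    List.nth k s i0 = List.nth l s i0 -> k = l.
  move=> k l /ltP Hk /ltP Hl; exact: (proj1 (List.NoDup_nth s i0) Hnd k l Hk Hl).
have Hwx : vsumn w n = x.
  apply: vext => j; rewrite coord_vsumn.
  case: (Classical_Prop.classic (List.In j s)) => Hj.
  - have [k0 [Hk0 Ek0]] := List.In_nth s j i0 Hj.
    have Hk0' : (k0 < n)%N by apply/ltP.
    rewrite (bigD1 (Ordinal Hk0')) //= big1 ?addr0.
      rewrite /w /=; destruct (excluded_middle_informative (j = List.nth k0 s i0)) as [E|E].
        by simpl; rewrite Ek0.
      by exfalso; apply: E.
    move=> k Hk /=.
    destruct (excluded_middle_informative (j = List.nth k s i0)) as [E|E] => //.
    exfalso; move/eqP: Hk; apply; apply: val_inj => /=.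
    apply: (nth_inj _ _ (ltn_ord k) Hk0'); by rewrite -E Ek0.
  - rewrite big1.
      case: (eqVneq (coord x j) 0) => // /Hin H; by case: Hj.
    move=> k _ /=.
    destruct (excluded_middle_informative (j = List.nth k s i0)) as [E|E] => //.
    exfalso; apply: Hj; rewrite E; apply: List.nth_In; apply/ltP; exact: ltn_ord.
have [C [HC2 [HC1 HCM]]] := select HR (Fp q b w (n:=n)).
pose Ks := flatten [seq [:: nat_of_ord p.1; nat_of_ord p.2] | p <- C].
pose P : pred nat := fun k => k \in Ks.
have Hqx : q x = \sum_p Fp q b w (n:=n) p by rewrite -Hwx (q_pairs qZ bD bZ qD).
have HqP : q (vsumn (uP P w) n) = q x.
  rewrite (q_pairs qZ bD bZ qD) Hqx.
  under eq_bigr do rewrite (Fp_mask qZ bC bZ).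
  rewrite -big_mkcond; apply: HCM => p Hp /=.
  by apply/andP; split; apply/flatten_mapP; exists p => //; rewrite !inE eqxx ?orbT.
have Hle : vle (vsumn (uP P w) n) x.
  exists (vsumn (uP (predC P) w) n); apply: vext => j.
  transitivity (coord (vsumn w n) j); last by rewrite Hwx.
  rewrite coord_vadd !coord_vsumn -big_split /=; apply: eq_bigr => k _.
  by rewrite /uP /=; case: (P k); rewrite /= ?add0r ?addr0.
have Heq : vsumn (uP P w) n = x.
  apply: Classical_Prop.NNPP => Hne; apply: Hmin.
  by exists (vsumn (uP P w) n); split.
have HallP : forall k, (k < n)%N -> P k.
  move=> k Hk; case Pk: (P k) => //; exfalso.
  have : coord x (List.nth k s i0) != 0 by apply/Hin; apply: List.nth_In; apply/ltP.
  rewrite -Heq coord_vsumn big1 ?eqxx // => l _; rewrite /uP.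
  case Pl: (P l) => //=.
  destruct (excluded_middle_informative (List.nth k s i0 = List.nth l s i0)) as [E|E] => //.
  have E' : nat_of_ord l = k by apply: nth_inj => //; rewrite E.
  by rewrite E' Pk in Pl.
have Hn : (n <= size Ks)%N.
  have: {subset iota 0 n <= Ks} by move=> k; rewrite mem_iota add0n => /andP [_ /HallP].
  by move/(uniq_leq_size (iota_uniq 0 n)); rewrite size_iota.
have HsK : size Ks = (2 * size C)%N by apply: size_flat2.
have Hcov : forall i, coord x i != 0 -> List.In i s by move=> i /Hin.
split => [Ht | Hg]; exists s; rewrite size_length -/n; split => //.
  by have := HC1; rewrite -Hqx => /(_ Ht); lia.
lia.
Qed.
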